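(* Let $(X,d)$ be a Hadamard space, $o\in X$ a fixed point and $\|x\|:=d(x,o)$ for $x\in X$. Let $C$ be a nonempty closed convex subset of $X$ and $T:C\to C$ a nonexpansive mapping with nonempty fixed point set $F(T)$. Let $\{\alpha_n\}_{n\ge0}$, $\{\beta_n\}_{n\ge0}$ be sequences in $(0,1)$ and $\{u_n\}_{n\ge0}\subset X$. Let $x_0\in C$ be arbitrary and define for $n\geqslant0$ $$y_n=\alpha_nu_n\oplus(1-\alpha_n)Tx_n,\qquad x_{n+1}=(1-\beta_n)x_n\oplus\beta_nP_Cy_n.$$ Suppose (i) $\lim_{n\to\infty}\alpha_n=0$ and $\sum_{n=0}^\infty\alpha_n=\infty$; (ii) $0<\liminf_{n\to\infty}\beta_n\leqslant\limsup_{n\to\infty}\beta_n<1$; (iii) $\sum_{n=0}^\infty\alpha_n\|u_n\|<\infty$. Then $\{x_n\}$ converges (in the metric $d$) to some $q\in F(T)$.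
   Context: A Hadamard space is a complete CAT(0) space. For $x,y\in X$ and $\lambda\in[0,1]$, $\lambda x\oplus(1-\lambda)y$ denotes the unique point $z$ on the geodesic segment from $x$ to $y$ with $d(z,x)=(1-\lambda)d(x,y)$ and $d(z,y)=\lambda d(x,y)$. $P_C:X\to C$ is the metric projection onto $C$ (the nearest-point map). $T$ nonexpansive means $d(Tx,Ty)\le d(x,y)$ for all $x,y\in C$, and $F(T)=\{x\in C: Tx=x\}$. *)

(* Defs.v *)
From Stdlib Require Import Reals.
From Coquelicot Require Import Coquelicot.
Open Scope R_scope.

Section Hadamard.
Variable X : Type.
Variable d : X -> X -> R.

Definition is_metric : Prop :=
  (forall x y, 0 <= d x y) /\
  (forall x y, d x y = 0 <-> x = y) /\
  (forall x y, d x y = d y x) /\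
  (forall x y z, d x z <= d x y + d y z).

Definition d_cauchy (s : nat -> X) : Prop :=
  forall eps, 0 < eps -> exists N, forall m n, (N <= m)%nat -> (N <= n)%nat ->
    d (s m) (s n) < eps.

Definition d_converges_to (s : nat -> X) (z : X) : Prop :=
  forall eps, 0 < eps -> exists N, forall n, (N <= n)%nat -> d (s n) z < eps.

Definition d_complete : Prop :=
  forall s, d_cauchy s -> exists z, d_converges_to s z.

Definition geodesic (x y : X) (c : R -> X) : Prop :=
  c 0 = x /\ c (d x y) = y /\
  forall s t, 0 <= s <= d x y -> 0 <= t <= d x y -> d (c s) (c t) = Rabs (s - t).

Definition geodesic_space : Prop :=
  forall x y, exists c, geodesic x y c.

Definition eucl (p q : R * R) : R :=
  sqrt ((fst p - fst q) ^ 2 + (snd p - snd q) ^ 2).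

Definition lerp (a b : R * R) (t : R) : R * R :=
  (fst a + t * (fst b - fst a), snd a + t * (snd b - snd a)).

(* p lies on the side [x,y] (traversed by the geodesic c) at parameter s, and
   pbar is its comparison point on the comparison side [a,b]. *)
Definition on_side (x y : X) (c : R -> X) (a b : R * R) (p : X) (pbar : R * R)
  : Prop :=
  exists s, 0 <= s <= d x y /\ p = c s /\ pbar = lerp a b (s / d x y).

Definition CAT0 : Prop :=
  forall (x1 x2 x3 : X) (c12 c23 c31 : R -> X) (a1 a2 a3 : R * R),
    geodesic x1 x2 c12 -> geodesic x2 x3 c23 -> geodesic x3 x1 c31 ->
    eucl a1 a2 = d x1 x2 -> eucl a2 a3 = d x2 x3 -> eucl a3 a1 = d x3 x1 ->
    forall p pbar q qbar,
      (on_side x1 x2 c12 a1 a2 p pbar \/ on_side x2 x3 c23 a2 a3 p pbar \/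
       on_side x3 x1 c31 a3 a1 p pbar) ->
      (on_side x1 x2 c12 a1 a2 q qbar \/ on_side x2 x3 c23 a2 a3 q qbar \/
       on_side x3 x1 c31 a3 a1 q qbar) ->
      d p q <= eucl pbar qbar.

Definition hadamard : Prop :=
  is_metric /\ d_complete /\ geodesic_space /\ CAT0.

(* z = lam x (+) (1 - lam) y : the point z on the geodesic segment from x to y
   with d z x = (1 - lam) d x y and d z y = lam d x y. *)
Definition convcomb (lam : R) (x y z : X) : Prop :=
  (exists c s, geodesic x y c /\ 0 <= s <= d x y /\ z = c s) /\
  d z x = (1 - lam) * d x y /\ d z y = lam * d x y.

Definition h_closed_set (C : X -> Prop) : Prop :=
  forall s z, (forall n, C (s n)) -> d_converges_to s z -> C z.

Definition h_convex_set (C : X -> Prop) : Prop :=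
  forall x y c, C x -> C y -> geodesic x y c ->
    forall s, 0 <= s <= d x y -> C (c s).

Definition is_metric_projection (C : X -> Prop) (P : X -> X) : Prop :=
  forall z, C (P z) /\ forall w, C w -> d z (P z) <= d z w.

Definition nonexpansive_on (C : X -> Prop) (T : X -> X) : Prop :=
  (forall x, C x -> C (T x)) /\
  forall x y, C x -> C y -> d (T x) (T y) <= d x y.

End Hadamard.

(* Main.v *)
Require Import Defs.
From Stdlib Require Import Reals Lra Psatz ClassicalEpsilon.
From Coquelicot Require Import Coquelicot.
Open Scope R_scope.

Section Geo.
Variable X : Type.
Variable d : X -> X -> R.
Hypothesis HM : is_metric X d.
Hypothesis HG : geodesic_space X d.
Hypothesis HC : CAT0 X d.

Lemma dpos : forall x y, 0 <= d x y.
Proof. destruct HM as [H _]; exact H. Qed.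
Lemma dsym : forall x y, d x y = d y x.
Proof. destruct HM as [_ [_ [H _]]]; exact H. Qed.
Lemma dtri : forall x y z, d x z <= d x y + d y z.
Proof. destruct HM as [_ [_ [_ H]]]; exact H. Qed.
Lemma dxx : forall x, d x x = 0.
Proof. intros; destruct HM as [_ [Hd _]]; apply Hd; auto. Qed.
Lemma deq : forall x y, d x y = 0 -> x = y.
Proof. intros; destruct HM as [_ [Hd _]]; apply Hd; auto. Qed.

Lemma cc_d1 : forall lam x y z, convcomb X d lam x y z -> d z x = (1-lam) * d x y.
Proof. intros lam x y z [_ [H _]]; exact H. Qed.
Lemma cc_d2 : forall lam x y z, convcomb X d lam x y z -> d z y = lam * d x y.
Proof. intros lam x y z [_ [_ H]]; exact H. Qed.

Lemma sq_le_of_le : forall a b, 0 <= a -> a <= b -> a^2 <= b^2.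
Proof. intros; nra. Qed.

Lemma CN : forall lam x y z w, convcomb X d lam x y z ->
  d w z ^ 2 <= lam * d w x ^ 2 + (1 - lam) * d w y ^ 2 - lam * (1 - lam) * d x y ^ 2.
Proof.
  intros lam x y z w Hc.
  destruct Hc as [[c [s [Hg [Hs Hz]]]] [H1 H2]].
  set (D := d x y) in *.
  destruct (Req_dec D 0) as [D0|Dn].
  - assert (Exy : x = y) by (apply deq; exact D0). subst y.
    assert (Ezx : z = x). { apply deq. rewrite H1, D0. ring. }
    rewrite Ezx, D0. apply Req_le. ring.
  - assert (Dp : 0 < D) by (pose proof (dpos x y) as Hd0; fold D in Hd0; lra).
    assert (Es : s = (1 - lam) * D).
    { destruct Hg as [Hc0 [HcD Hiso]].
      rewrite <- H1. rewrite Hz. rewrite <- Hc0.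
      rewrite Hiso by (fold D; lra). rewrite Rminus_0_r. symmetry; apply Rabs_pos_eq; lra. }
    set (b := d x w). set (cc := d y w).
    assert (Tb1 : cc <= D + b).
    { unfold cc, D, b. rewrite (dsym x y). apply dtri. }
    assert (Tb2 : D <= b + cc).
    { unfold cc, D, b. rewrite (dsym y w). apply dtri. }
    assert (Tb3 : b <= D + cc).
    { unfold cc, D, b. apply dtri. }
    assert (bp : 0 <= b) by apply dpos. assert (cp : 0 <= cc) by apply dpos.
    set (X3 := (D^2 + b^2 - cc^2) / (2 * D)).
    assert (HX3a : X3 <= b).
    { unfold X3. apply Rmult_le_reg_r with (2 * D); [lra|].
      unfold Rdiv. rewrite Rmult_assoc, Rinv_l, Rmult_1_r by lra. nra. }
    assert (HX3b : - b <= X3).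
    { unfold X3. apply Rmult_le_reg_r with (2 * D); [lra|].
      unfold Rdiv. rewrite Rmult_assoc, Rinv_l, Rmult_1_r by lra. nra. }
    assert (HY : 0 <= b^2 - X3^2) by nra.
    set (Y3 := sqrt (b^2 - X3^2)).
    assert (HY3 : Y3 ^ 2 = b^2 - X3^2) by (unfold Y3; apply pow2_sqrt; exact HY).
    destruct (HG y w) as [c23 Hg23].
    destruct (HG w x) as [c31 Hg31].
    pose (a1 := (0, 0)). pose (a2 := (D, 0)). pose (a3 := (X3, Y3)).
    assert (E12 : eucl a1 a2 = d x y).
    { unfold eucl, a1, a2; cbn [fst snd]. replace ((0 - D) ^ 2 + (0 - 0) ^ 2) with (D^2) by ring.
      apply sqrt_pow2; apply dpos. }
    assert (E23 : eucl a2 a3 = d y w).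
    { unfold eucl, a2, a3; cbn [fst snd].
      replace ((D - X3) ^ 2 + (0 - Y3) ^ 2) with (D^2 - 2 * D * X3 + b^2) by (replace ((0 - Y3)^2) with (Y3^2) by ring; rewrite HY3; ring).
      replace (D ^ 2 - 2 * D * X3 + b ^ 2) with (cc ^ 2).
      - apply sqrt_pow2; apply dpos.
      - unfold X3. field. lra. }
    assert (E31 : eucl a3 a1 = d w x).
    { unfold eucl, a3, a1; cbn [fst snd].
      replace ((X3 - 0) ^ 2 + (Y3 - 0) ^ 2) with (b^2) by (replace ((Y3 - 0)^2) with (Y3^2) by ring; rewrite HY3; ring).
      rewrite (dsym w x). apply sqrt_pow2; apply dpos. }
    assert (Hcat := HC x y w c c23 c31 a1 a2 a3 Hg Hg23 Hg31 E12 E23 E31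
      z (lerp a1 a2 (s / d x y)) w (lerp a3 a1 (0 / d w x))).
    assert (Hle : d z w <= eucl (lerp a1 a2 (s / d x y)) (lerp a3 a1 (0 / d w x))).
    { apply Hcat.
      - left. exists s. split; [fold D; lra|]. split; auto.
      - right; right. exists 0. split; [split; [lra|apply dpos]|]. split; auto.
        destruct Hg31 as [H0 _]; auto. }
    revert Hle. unfold eucl, lerp, a1, a2, a3; cbn [fst snd]. fold D.
    replace (0 / d w x) with 0 by (unfold Rdiv; ring).
    replace ((0 + s / D * (D - 0) - (X3 + 0 * (0 - X3))) ^ 2 +
      (0 + s / D * (0 - 0) - (Y3 + 0 * (0 - Y3))) ^ 2) with (s^2 - 2 * s * X3 + b^2)
      by (assert (Hs0 : s / D * (D - 0) = s) by (field; lra); rewrite Hs0;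
          replace (b^2) with (Y3^2 + X3^2) by (rewrite HY3; ring); ring).
    intro Hle.
    assert (Hq : 0 <= s ^ 2 - 2 * s * X3 + b ^ 2).
    { replace (s ^ 2 - 2 * s * X3 + b ^ 2) with ((s - X3)^2 + (b^2 - X3^2)) by ring. pose proof (pow2_ge_0 (s - X3)); lra. }
    apply sq_le_of_le in Hle; [|apply dpos].
    rewrite pow2_sqrt in Hle by exact Hq.
    rewrite (dsym w z), (dsym w x), (dsym w y). fold b cc.
    replace (lam * b ^ 2 + (1 - lam) * cc ^ 2 - lam * (1 - lam) * D ^ 2)
      with (s ^ 2 - 2 * s * X3 + b ^ 2); [exact Hle|].
    rewrite Es. unfold X3. field. lra.
Qed.


Lemma sq_le_inv : forall a b, 0 <= b -> a^2 <= b^2 -> a <= b.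
Proof. intros; nra. Qed.

Lemma cc_exists : forall lam x y, 0 <= lam <= 1 -> exists z, convcomb X d lam x y z.
Proof.
  intros lam x y Hl. destruct (HG x y) as [c Hg].
  pose proof (dpos x y) as Hd.
  exists (c ((1 - lam) * d x y)). destruct Hg as [H0 [HD Hi]].
  split; [|split].
  - exists c, ((1 - lam) * d x y). split; [split; auto|]. split; [nra|auto].
  - rewrite <- H0 at 2. rewrite Hi by nra. rewrite Rminus_0_r. apply Rabs_pos_eq; nra.
  - rewrite <- HD at 2. rewrite Hi by nra.
    replace ((1 - lam) * d x y - d x y) with (- (lam * d x y)) by ring.
    rewrite Rabs_Ropp. apply Rabs_pos_eq; nra.
Qed.

Lemma G4a : forall lam a b v z1 z2, 0 <= lam ->
  convcomb X d lam a v z1 -> convcomb X d lam b v z2 -> d z1 z2 <= lam * d a b.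
Proof.
  intros lam a b v z1 z2 Hl H1 H2.
  apply sq_le_inv; [pose proof (dpos a b); nra|].
  pose proof (CN lam a v z1 z2 H1) as C1.
  pose proof (CN lam b v z2 a H2) as C2.
  pose proof (cc_d2 _ _ _ _ H2) as E2.
  rewrite (dsym z1 z2). rewrite E2 in C1.
  assert (lam * d z2 a ^ 2 <= lam * (lam * d a b ^ 2 + (1 - lam) * d a v ^ 2 - lam * (1 - lam) * d b v ^ 2)).
  { apply Rmult_le_compat_l; auto. rewrite (dsym z2 a). exact C2. }
  nra.
Qed.

Lemma G4b : forall lam o v v' z1 z2, lam <= 1 ->
  convcomb X d lam o v z1 -> convcomb X d lam o v' z2 -> d z1 z2 <= (1 - lam) * d v v'.
Proof.
  intros lam o v v' z1 z2 Hl H1 H2.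
  apply sq_le_inv; [pose proof (dpos v v'); nra|].
  pose proof (CN lam o v z1 z2 H1) as C1.
  pose proof (CN lam o v' z2 v H2) as C2.
  pose proof (cc_d1 _ _ _ _ H2) as E2.
  rewrite (dsym z1 z2). rewrite E2 in C1.
  assert ((1-lam) * d z2 v ^ 2 <= (1-lam) * (lam * d v o ^ 2 + (1 - lam) * d v v' ^ 2 - lam * (1 - lam) * d o v' ^ 2)).
  { apply Rmult_le_compat_l; [lra|]. rewrite (dsym z2 v). exact C2. }
  rewrite (dsym v o) in H. nra.
Qed.

Lemma quad : forall x y a b,
  d x b ^ 2 + d y a ^ 2 <= d x a ^ 2 + d y b ^ 2 + d x y ^ 2 + d a b ^ 2.
Proof.
  intros x y a b.
  destruct (cc_exists (1/2) x b) as [m Hm]; [lra|].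
  pose proof (CN _ _ _ _ a Hm) as C1.
  pose proof (CN _ _ _ _ y Hm) as C2.
  pose proof (dtri y m a) as T1.
  pose proof (dpos y m). pose proof (dpos m a).
  assert (d y a ^ 2 <= (d y m + d m a) ^ 2) by (apply sq_le_of_le; [apply dpos|exact T1]).
  assert (d y a ^ 2 <= 2 * d y m ^ 2 + 2 * d m a ^ 2) by (pose proof (pow2_ge_0 (d y m - d m a)); nra).
  rewrite (dsym m a) in H2. rewrite (dsym a x), (dsym y x) in *. nra.
Qed.

Variable C : X -> Prop.
Variable P : X -> X.
Hypothesis HP : is_metric_projection X d C P.
Hypothesis HCcv : h_convex_set X d C.

Lemma PC : forall z, C (P z).
Proof. intro z. apply (HP z). Qed.

Lemma cc_convex : forall lam a b z, C a -> C b -> convcomb X d lam a b z -> C z.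
Proof.
  intros lam a b z Ha Hb [[c [s [Hg [Hs Hz]]]] _]. subst z. exact (HCcv a b c Ha Hb Hg s Hs).
Qed.

Lemma P3 : forall y w, C w -> d y (P y) ^ 2 + d (P y) w ^ 2 <= d y w ^ 2.
Proof.
  intros y w Hw. set (a := P y). set (D := d a w).
  assert (Key : forall t, 0 < t < 1 -> d y a ^ 2 + (1 - t) * D ^ 2 <= d y w ^ 2).
  { intros t Ht. destruct (cc_exists (1 - t) a w) as [z Hz]; [lra|].
    assert (Cz : C z) by (apply (cc_convex _ _ _ _ (PC y) Hw Hz)).
    assert (Hmin : d y a <= d y z) by (apply (HP y); exact Cz).
    pose proof (CN _ _ _ _ y Hz) as Cn.
    assert (d y a ^ 2 <= d y z ^ 2) by (apply sq_le_of_le; [apply dpos|exact Hmin]).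
    fold D in Cn. replace (1 - (1 - t)) with t in Cn by ring.
    assert (t * (d y a ^ 2 + (1 - t) * D ^ 2) <= t * d y w ^ 2) by nra.
    apply Rmult_le_reg_l with t; lra. }
  destruct (Rle_dec (d y a ^ 2 + D ^ 2) (d y w ^ 2)) as [Hle|Hgt]; [exact Hle|].
  exfalso. set (E := d y a ^ 2 + D ^ 2 - d y w ^ 2).
  assert (Ep : 0 < E) by (unfold E; lra).
  set (t := Rmin (1/2) (E / (2 * (D^2 + 1)))).
  assert (tp : 0 < t). { unfold t. apply Rmin_pos; [lra|]. apply Rdiv_lt_0_compat; [lra|]. nra. }
  assert (t1 : t <= 1/2) by apply Rmin_l.
  assert (t2 : t <= E / (2 * (D^2 + 1))) by apply Rmin_r.
  assert (t3 : t * (D^2 + 1) <= E / 2).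
  { apply Rle_trans with (E / (2 * (D ^ 2 + 1)) * (D^2+1)).
    - apply Rmult_le_compat_r; [nra|exact t2].
    - right. field. nra. }
  pose proof (Key t ltac:(lra)) as K. unfold E in *. nra.
Qed.

Lemma Pnonexp : forall a b, d (P a) (P b) <= d a b.
Proof.
  intros a b.
  pose proof (P3 a (P b) (PC b)) as H1.
  pose proof (P3 b (P a) (PC a)) as H2.
  pose proof (quad a b (P a) (P b)) as Q.
  apply sq_le_inv; [apply dpos|].
  rewrite (dsym (P b) (P a)) in H2. nra.
Qed.

End Geo.


Section Banach.
Variable X : Type.
Variable d : X -> X -> R.
Hypothesis HM : is_metric X d.
Hypothesis Hcomp : d_complete X d.
Variable C : X -> Prop.
Hypothesis HCcl : h_closed_set X d C.

Lemma d_zero_of_small : forall a b, (forall eps, 0 < eps -> d a b < eps) -> a = b.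
Proof.
  intros a b H. apply (deq X d HM). pose proof (dpos X d HM a b).
  destruct (Req_dec (d a b) 0) as [E|E]; auto.
  exfalso. specialize (H (d a b) ltac:(lra)). lra.
Qed.

Lemma banach : forall (F : X -> X) (r : R), 0 <= r < 1 ->
  (forall z, C z -> C (F z)) ->
  (forall z z', C z -> C z' -> d (F z) (F z') <= r * d z z') ->
  forall c0, C c0 -> exists z, C z /\ F z = z.
Proof.
  intros F r Hr HSC HSc c0 Hc0.
  set (v := fun j => Nat.iter j F c0).
  assert (vS : forall j, v (S j) = F (v j)) by (intro; reflexivity).
  assert (vC : forall j, C (v j)).
  { induction j; [exact Hc0|]. rewrite vS. apply HSC; auto. }
  set (d1 := d (v 1%nat) (v 0%nat)).
  assert (d1p : 0 <= d1) by apply (dpos X d HM).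
  assert (step : forall j, d (v (S j)) (v j) <= r ^ j * d1).
  { induction j.
    - unfold d1. simpl. lra.
    - rewrite (vS (S j)), (vS j). eapply Rle_trans. apply HSc; auto.
      rewrite <- vS. rewrite <- tech_pow_Rmult. rewrite Rmult_assoc. apply Rmult_le_compat_l; lra. }
  assert (far : forall j k, d (v j) (v (j + k)%nat) <= r ^ j * d1 * (1 - r ^ k) / (1 - r)).
  { intros j k. induction k.
    - rewrite Nat.add_0_r, (dxx X d HM). simpl. unfold Rdiv. rewrite Rminus_diag. lra.
    - eapply Rle_trans. apply (dtri X d HM) with (y := v (j + k)%nat).
      rewrite Nat.add_succ_r. rewrite (dsym X d HM (v (j + k)%nat)). 
      eapply Rle_trans. apply Rplus_le_compat. exact IHk. apply step.
      right. rewrite pow_add. simpl. field. lra. }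
  assert (far2 : forall j k, d (v j) (v (j + k)%nat) <= r ^ j * (d1 / (1 - r))).
  { intros j k. eapply Rle_trans. apply far.
    assert (0 <= r ^ k) by (apply pow_le; lra). assert (0 <= r ^ j) by (apply pow_le; lra).
    assert (0 <= d1 / (1 - r)) by (apply Rdiv_le_0_compat; lra).
    replace (r ^ j * d1 * (1 - r ^ k) / (1 - r)) with ((r ^ j * (d1 / (1 - r))) * (1 - r ^ k)) by (field; lra).
    assert (0 <= r ^ j * (d1 / (1 - r))) by (apply Rmult_le_pos; auto). nra. }
  set (K := d1 / (1 - r) + 1).
  assert (Kp : 0 < K). { unfold K. assert (0 <= d1 / (1 - r)) by (apply Rdiv_le_0_compat; lra). lra. }
  assert (small : forall eps, 0 < eps -> exists N, forall j, (N <= j)%nat -> r ^ j * K < eps).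
  { intros eps He. destruct (pow_lt_1_zero r ltac:(rewrite Rabs_pos_eq; lra) (eps / K)) as [N HN].
    { apply Rdiv_lt_0_compat; lra. }
    exists N. intros j Hj. specialize (HN j Hj). rewrite Rabs_pos_eq in HN by (apply pow_le; lra).
    apply Rmult_lt_compat_r with (r := K) in HN; auto.
    unfold Rdiv in HN. rewrite Rmult_assoc, Rinv_l, Rmult_1_r in HN by lra. exact HN. }
  assert (Hcau : d_cauchy X d v).
  { intros eps He. destruct (small eps He) as [N HN]. exists N. intros m n Hm Hn.
    destruct (Nat.le_ge_cases m n) as [Hmn|Hmn].
    - replace n with (m + (n - m))%nat by lia.
      eapply Rle_lt_trans. apply far2. eapply Rle_lt_trans; [|apply (HN m Hm)].
      apply Rmult_le_compat_l; [apply pow_le; lra|]. unfold K; lra.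
    - rewrite (dsym X d HM). replace m with (n + (m - n))%nat by lia.
      eapply Rle_lt_trans. apply far2. eapply Rle_lt_trans; [|apply (HN n Hn)].
      apply Rmult_le_compat_l; [apply pow_le; lra|]. unfold K; lra. }
  destruct (Hcomp v Hcau) as [z Hz].
  assert (Cz : C z) by (apply (HCcl v z vC Hz)).
  exists z. split; auto.
  apply d_zero_of_small. intros eps He.
  destruct (Hz (eps / 2) ltac:(lra)) as [N HN].
  eapply Rle_lt_trans. apply (dtri X d HM) with (y := v (S N)).
  rewrite vS. eapply Rle_lt_trans. apply Rplus_le_compat_r. apply HSc; auto.
  rewrite <- vS. pose proof (HN N (le_n N)) as H1. pose proof (HN (S N) (le_S _ _ (le_n N))) as H2.
  rewrite (dsym X d HM z (v N)). pose proof (dpos X d HM (v N) z). nra.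
Qed.
End Banach.


Section Zt.
Variable X : Type.
Variable d : X -> X -> R.
Hypothesis HM : is_metric X d.
Hypothesis HG : geodesic_space X d.
Hypothesis HCAT : CAT0 X d.
Hypothesis Hcomp : d_complete X d.
Variable C : X -> Prop.
Hypothesis HCcl : h_closed_set X d C.
Hypothesis HCcv : h_convex_set X d C.
Variable P : X -> X.
Hypothesis HP : is_metric_projection X d C P.
Variable T : X -> X.
Hypothesis HT : nonexpansive_on X d C T.
Variable o p0 : X.
Hypothesis Hp0C : C p0.
Hypothesis Hp0T : T p0 = p0.

Notation dpos := (dpos X d HM).
Notation dsym := (dsym X d HM).
Notation dtri := (dtri X d HM).
Notation CN := (CN X d HM HG HCAT).

Lemma TC : forall z, C z -> C (T z).
Proof. apply HT. Qed.
Lemma Tne : forall a b, C a -> C b -> d (T a) (T b) <= d a b.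
Proof. apply HT. Qed.

Definition ccf (lam : R) (a b : X) : X :=
  epsilon (inhabits a) (fun z => convcomb X d lam a b z).

Lemma ccf_spec : forall lam a b, 0 <= lam <= 1 -> convcomb X d lam a b (ccf lam a b).
Proof.
  intros lam a b Hl. unfold ccf. apply epsilon_spec. apply (cc_exists X d HM HG); auto.
Qed.

Definition good (t : R) (z : X) : Prop :=
  C z /\ forall x, C x ->
    d z x ^ 2 <= t * d o x ^ 2 + (1 - t) * d (T z) x ^ 2 - t * (1 - t) * d o (T z) ^ 2.

Lemma good_exists : forall t, 0 < t < 1 -> exists z, good t z.
Proof.
  intros t Ht.
  destruct (banach X d HM Hcomp C HCcl (fun z => P (ccf t o (T z))) (1 - t)) with (c0 := p0)
    as [z [Cz Fz]]; auto.
  - lra.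
  - intros z _. apply (PC X d C P HP).
  - intros z z' Cz Cz'.
    eapply Rle_trans. apply (Pnonexp X d HM HG HCAT C P HP HCcv).
    eapply Rle_trans. apply (G4b X d HM HG HCAT t o (T z) (T z')); [lra| apply ccf_spec; lra | apply ccf_spec; lra].
    apply Rmult_le_compat_l; [lra|]. apply Tne; auto.
  - exists z. split; auto. intros x Cx.
    set (w := ccf t o (T z)).
    assert (Hw : convcomb X d t o (T z) w) by (apply ccf_spec; lra).
    pose proof (P3 X d HM HG HCAT C P HP HCcv w x Cx) as H3.
    pose proof (CN _ _ _ _ x Hw) as H4.
    fold w in Fz. rewrite Fz in H3.
    rewrite (dsym x w), (dsym x o), (dsym x (T z)) in H4.
    pose proof (pow2_ge_0 (d w z)). lra.
Qed.

Lemma good_b : forall t z, 0 < t < 1 -> good t z -> d z (T z) <= t * d o (T z).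
Proof.
  intros t z Ht [Cz Hz]. specialize (Hz (T z) (TC z Cz)).
  rewrite (dxx X d HM) in Hz.
  apply sq_le_inv; [pose proof (dpos o (T z)); nra|]. nra.
Qed.

Lemma good_c : forall t z p, 0 < t < 1 -> good t z -> C p -> T p = p ->
  d z p ^ 2 + (1 - t) * d o (T z) ^ 2 <= d o p ^ 2.
Proof.
  intros t z p Ht [Cz Hz] Cp Tp. specialize (Hz p Cp).
  assert (d (T z) p ^ 2 <= d z p ^ 2).
  { apply sq_le_of_le; [apply dpos|]. rewrite <- Tp at 1. apply Tne; auto. }
  assert (t * (d z p ^ 2 + (1 - t) * d o (T z) ^ 2) <= t * d o p ^ 2) by nra.
  apply Rmult_le_reg_l with t; lra.
Qed.

Let K := d o p0.
Lemma Kpos : 0 <= K.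
Proof. apply dpos. Qed.

Lemma good_bounds : forall t z, 0 < t <= 1/2 -> good t z ->
  d z p0 <= K /\ d o (T z) <= 2 * K /\ d z (T z) <= 2 * K * t /\ d o z <= 2 * K.
Proof.
  intros t z Ht Hg.
  pose proof (good_c t z p0 ltac:(lra) Hg Hp0C Hp0T) as Hc. fold K in Hc.
  pose proof Kpos.
  pose proof (dpos z p0). pose proof (dpos o (T z)).
  assert (A1 : d z p0 <= K) by (apply sq_le_inv; nra).
  assert (A2 : d o (T z) <= 2 * K) by (apply sq_le_inv; nra).
  pose proof (good_b t z ltac:(lra) Hg).
  split; auto. split; auto. split; [nra|].
  pose proof (dtri o p0 z) as H5. rewrite (dsym p0 z) in H5. fold K in H5. lra.
Qed.

Lemma pair_est : forall s t z z', 0 < s <= t -> t <= 1/2 -> good t z -> good s z' ->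
  d z z' ^ 2 <= d o z' ^ 2 - d o z ^ 2 + 20 * K ^ 2 * (t + s / t).
Proof.
  intros s t z z' Hst Ht Hz Hz'.
  destruct (good_bounds t z ltac:(lra) Hz) as [B1 [B2 [B3 B4]]].
  destruct (good_bounds s z' ltac:(lra) Hz') as [B1' [B2' [B3' B4']]].
  pose proof Kpos as HK.
  destruct Hz as [Cz Hz]. pose proof Hz' as Hg'. destruct Hz' as [Cz' _].
  specialize (Hz z' Cz').
  set (D := d z z').
  assert (HD : D <= 2 * K). { unfold D. pose proof (dtri z p0 z'). rewrite (dsym p0 z') in H. lra. }
  assert (HD0 : 0 <= D) by apply dpos.
  set (e := d z' (T z')).
  assert (He0 : 0 <= e) by apply dpos.
  assert (HTz : d (T z) z' <= D + e).
  { eapply Rle_trans. apply (dtri (T z) (T z') z'). rewrite (dsym (T z') z'). fold e.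
    apply Rplus_le_compat_r. apply Tne; auto. }
  assert (HTz2 : d (T z) z' ^ 2 <= D ^ 2 + 12 * K ^ 2 * s).
  { eapply Rle_trans. apply sq_le_of_le; [apply dpos|exact HTz]. 
    assert (Hes : e <= 2 * K * s) by exact B3'.
    assert (2 * D * e <= 2 * (2 * K) * (2 * K * s)) by (apply Rmult_le_compat; nra).
    assert (e * e <= (2 * K * s) * (2 * K * s)) by (apply Rmult_le_compat; nra).
    assert (K ^ 2 * s * s <= K ^ 2 * s) by (assert (0 <= K^2) by nra; nra).
    nra. }
  set (g := d o z). set (h := d o (T z)).
  assert (Hgh : g ^ 2 <= h ^ 2 + 12 * K ^ 2 * t).
  { assert (g <= h + 2 * K * t).
    { unfold g, h. pose proof (dtri o (T z) z). rewrite (dsym (T z) z) in H. lra. }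
    assert (0 <= g) by apply dpos. assert (0 <= h) by apply dpos.
    assert (g ^ 2 <= (h + 2 * K * t) ^ 2) by (apply sq_le_of_le; auto).
    assert (Hh2 : h <= 2 * K) by exact B2.
    assert (h * t <= 2 * K * t) by (apply Rmult_le_compat_r; lra).
    assert (K ^ 2 * t * t <= K ^ 2 * t) by (assert (0 <= K^2) by nra; nra).
    nra. }
  fold D h in Hz.
  assert (Hh : h <= 2 * K) by exact B2. assert (0 <= h) by apply dpos.
  assert (t * D ^ 2 <= t * d o z' ^ 2 + (1 - t) * (12 * K ^ 2 * s) - t * (1 - t) * h ^ 2 + t * t * h ^ 2 - t * t * h^2) by nra.
  assert (D ^ 2 <= d o z' ^ 2 - (1 - t) * h ^ 2 + 12 * K ^ 2 * (s / t)).
  { apply Rmult_le_reg_l with t; [lra|].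
    replace (t * (d o z' ^ 2 - (1 - t) * h ^ 2 + 12 * K ^ 2 * (s / t))) with
      (t * d o z' ^ 2 - t * (1 - t) * h ^ 2 + 12 * K ^ 2 * s) by (field; lra).
    assert (0 <= K ^ 2 * s * t) by (apply Rmult_le_pos; [apply Rmult_le_pos; nra|lra]). nra. }
  assert (h ^ 2 <= 4 * K ^ 2) by nra.
  assert (0 <= s / t) by (apply Rdiv_le_0_compat; lra).
  nra.
Qed.


Lemma hp_le1 : forall k, 0 < (1/2) ^ k <= 1.
Proof.
  induction k; simpl; [lra|]. lra.
Qed.

Lemma hp_mono : forall m n, (m <= n)%nat -> (1/2) ^ n <= (1/2) ^ m.
Proof.
  intros m n H. replace n with (m + (n - m))%nat by lia. rewrite pow_add.
  pose proof (hp_le1 m). pose proof (hp_le1 (n - m)). nra.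
Qed.

Lemma hp_small : forall eps, 0 < eps -> exists N, forall n, (N <= n)%nat -> (1/2) ^ n < eps.
Proof.
  intros eps He. destruct (pow_lt_1_zero (1/2) ltac:(rewrite Rabs_pos_eq; lra) eps He) as [N HN].
  exists N. intros n Hn. specialize (HN n Hn). rewrite Rabs_pos_eq in HN; [auto|apply Rlt_le, hp_le1].
Qed.

Definition tk (k : nat) : R := (1/2) ^ (k * k + 1).

Lemma tk_pos : forall k, 0 < tk k <= 1/2.
Proof.
  intro k. unfold tk. rewrite pow_add. pose proof (hp_le1 (k * k)). simpl. lra.
Qed.

Lemma tk_le : forall k, tk k <= (1/2) ^ k.
Proof. intro k. unfold tk. apply hp_mono. nia. Qed.

Lemma tk_ratio : forall k j, (k < j)%nat -> tk j / tk k <= (1/2) ^ k.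
Proof.
  intros k j H. unfold tk.
  replace (j * j + 1)%nat with ((k * k + 1) + (k + (j * j - k * k - k)))%nat by nia.
  rewrite (pow_add (1/2) (k * k + 1)), (pow_add (1/2) k). pose proof (hp_le1 (k * k + 1)). pose proof (hp_le1 k).
  pose proof (hp_le1 (j * j - k * k - k)).
  replace ((1 / 2) ^ (k * k + 1) * ((1 / 2) ^ k * (1 / 2) ^ (j * j - k * k - k)) / (1 / 2) ^ (k * k + 1))
    with ((1 / 2) ^ k * (1 / 2) ^ (j * j - k * k - k)) by (field; lra).
  nra.
Qed.

Definition zk (k : nat) : X := epsilon (inhabits p0) (good (tk k)).

Lemma zk_good : forall k, good (tk k) (zk k).
Proof.
  intro k. unfold zk. apply epsilon_spec. apply good_exists. pose proof (tk_pos k). lra.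
Qed.

Lemma zk_C : forall k, C (zk k).
Proof. intro k. apply (zk_good k). Qed.

Definition c0 := 20 * K ^ 2.
Lemma c0pos : 0 <= c0.
Proof. unfold c0. pose proof Kpos. nra. Qed.

Definition gk k := d o (zk k) ^ 2.

Lemma zk_pair : forall k j, (k < j)%nat ->
  d (zk k) (zk j) ^ 2 <= gk j - gk k + 2 * c0 * (1/2) ^ k.
Proof.
  intros k j H. unfold gk.
  pose proof (tk_pos k). pose proof (tk_pos j).
  assert (tk j <= tk k).
  { pose proof (tk_ratio k j H). pose proof (hp_le1 k).
    assert (Hr1 : tk j / tk k <= 1) by lra. unfold Rdiv in Hr1.
    apply Rmult_le_reg_r with (/ tk k). apply Rinv_0_lt_compat; lra.
    rewrite Rinv_r by lra. exact Hr1. }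
  eapply Rle_trans. apply (pair_est (tk j) (tk k) (zk k) (zk j)); [lra|lra|apply zk_good|apply zk_good].
  pose proof (tk_le k). pose proof (tk_ratio k j H). pose proof Kpos.
  unfold c0. nra.
Qed.

Definition Gk k := gk k - 4 * c0 * (1/2) ^ k.

Lemma Gk_growing : Un_growing Gk.
Proof.
  intro k. unfold Gk.
  pose proof (zk_pair k (S k) (Nat.lt_succ_diag_r k)).
  pose proof (pow2_ge_0 (d (zk k) (zk (S k)))).
  simpl. lra.
Qed.

Lemma Gk_ub : has_ub Gk.
Proof.
  exists (4 * K ^ 2). intros r [k Hk]. subst r. unfold Gk, gk.
  destruct (good_bounds (tk k) (zk k) ltac:(pose proof (tk_pos k); lra) (zk_good k)) as [_ [_ [_ B4]]].
  pose proof (dpos o (zk k)). pose proof (hp_le1 k). pose proof c0pos. nra.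
Qed.

Lemma zk_cauchy : d_cauchy X d zk.
Proof.
  destruct (growing_cv Gk Gk_growing Gk_ub) as [l Hl].
  intros eps He.
  destruct (Hl (eps ^ 2 / 4) ltac:(nra)) as [N1 HN1].
  destruct (hp_small (eps ^ 2 / (4 * (4 * c0 + 1)))) as [N2 HN2].
  { apply Rdiv_lt_0_compat; [nra|]. pose proof c0pos. lra. }
  exists (N1 + N2)%nat.
  assert (Main : forall k j, (N1 + N2 <= k)%nat -> (k < j)%nat -> d (zk k) (zk j) < eps).
  { intros k j Hk Hj. apply Rnot_le_lt. intro Hc.
    assert (eps ^ 2 <= d (zk k) (zk j) ^ 2) by (apply sq_le_of_le; lra).
    pose proof (zk_pair k j Hj).
    pose proof (HN1 k ltac:(lia)). pose proof (HN1 j ltac:(lia)).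
    unfold Rdist in *. apply Rabs_def2 in H1. apply Rabs_def2 in H2.
    pose proof (HN2 k ltac:(lia)). pose proof (hp_mono k j ltac:(lia)).
    pose proof c0pos. pose proof (hp_le1 k). pose proof (hp_le1 j).
    unfold Gk in *.
    assert (4 * c0 * (1/2)^k <= eps ^ 2 / 4).
    { apply Rle_trans with ((4 * c0 + 1) * (eps ^ 2 / (4 * (4 * c0 + 1)))).
      - apply Rmult_le_compat; nra.
      - right. field. lra. }
    nra. }
  intros m n Hm Hn.
  destruct (Nat.lt_trichotomy m n) as [Hmn|[Hmn|Hmn]].
  - apply Main; auto.
  - subst. rewrite (dxx X d HM). lra.
  - rewrite dsym. apply Main; auto.
Qed.


Definition qlim : X := epsilon (inhabits p0) (fun z => d_converges_to X d zk z).

Lemma qlim_spec : d_converges_to X d zk qlim.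
Proof. unfold qlim. apply epsilon_spec. apply Hcomp. apply zk_cauchy. Qed.

Lemma qlim_C : C qlim.
Proof. apply (HCcl zk qlim zk_C qlim_spec). Qed.

Lemma approx : forall eps, 0 < eps -> exists k, tk k < eps /\ d (zk k) qlim < eps.
Proof.
  intros eps He. destruct (qlim_spec eps He) as [N1 HN1].
  destruct (hp_small eps He) as [N2 HN2].
  exists (N1 + N2)%nat. split.
  - eapply Rle_lt_trans. apply tk_le. apply HN2. lia.
  - apply HN1. lia.
Qed.

Lemma qlim_fix : T qlim = qlim.
Proof.
  apply (d_zero_of_small X d HM). intros eps He.
  destruct (approx (eps / (4 * K + 4))) as [k [Hk1 Hk2]].
  { apply Rdiv_lt_0_compat; [lra|]. pose proof Kpos; lra. }
  destruct (good_bounds (tk k) (zk k) ltac:(pose proof (tk_pos k); lra) (zk_good k)) as [_ [_ [B3 _]]].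
  pose proof (dtri (T qlim) (T (zk k)) qlim).
  pose proof (dtri (T (zk k)) (zk k) qlim).
  pose proof (Tne qlim (zk k) qlim_C (zk_C k)).
  rewrite (dsym (T (zk k)) (zk k)) in H0. rewrite (dsym qlim (zk k)) in H1.
  pose proof Kpos. pose proof (tk_pos k).
  assert (2 * K * tk k <= 2 * K * (eps / (4 * K + 4))) by (apply Rmult_le_compat_l; lra).
  assert (K * (eps / (4 * K + 4)) <= eps / 4).
  { apply Rle_trans with ((K + 1) * (eps / (4 * K + 4))).
    - apply Rmult_le_compat_r; [|lra]. apply Rlt_le, Rdiv_lt_0_compat; lra.
    - right. field. lra. }
  assert (eps / (4 * K + 4) <= eps / 4).
  { apply Rmult_le_compat_l; [lra|]. apply Rinv_le_contravar; lra. }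
  lra.
Qed.

Lemma Ulem : forall delta B, 0 < delta -> 0 <= B -> exists theta, 0 < theta /\
  forall w, C w -> d w p0 <= B -> d w (T w) < theta ->
    d w qlim ^ 2 - d w o ^ 2 + d o qlim ^ 2 <= delta.
Proof.
  intros delta B Hdel HB. pose proof Kpos as HK.
  set (M1 := 2 * (K + B) + 1). set (L := 6 * K + 2 * B + 2).
  set (eps0 := Rmin (Rmin 1 (delta / (3 * L))) (delta / (3 * (4 * K ^ 2 + 1)))).
  assert (e0 : 0 < eps0).
  { unfold eps0. repeat apply Rmin_pos; try lra; apply Rdiv_lt_0_compat; unfold L; nra. }
  assert (e1 : eps0 <= 1) by (unfold eps0; eapply Rle_trans; [apply Rmin_l|apply Rmin_l]).
  assert (e2 : eps0 <= delta / (3 * L)) by (unfold eps0; eapply Rle_trans; [apply Rmin_l|apply Rmin_r]).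
  assert (e3 : eps0 <= delta / (3 * (4 * K ^ 2 + 1))) by (unfold eps0; apply Rmin_r).
  destruct (approx eps0 e0) as [k [Hk1 Hk2]].
  set (t := tk k) in *. set (z := zk k) in *. set (rho := d z qlim) in *.
  assert (Ht : 0 < t <= 1/2) by apply tk_pos.
  assert (rho1 : rho <= 1) by lra.
  assert (rho2 : rho * L <= delta / 3).
  { assert (0 < L) by (unfold L; lra). assert (0 <= rho) by apply dpos.
    apply Rle_trans with ((delta / (3 * L)) * L). apply Rmult_le_compat_r; lra.
    right. field. lra. }
  assert (t2 : t * (4 * K ^ 2) <= delta / 3).
  { apply Rle_trans with ((delta / (3 * (4 * K ^ 2 + 1))) * (4 * K ^ 2 + 1)).
    - assert (0 <= K^2) by nra. apply Rmult_le_compat; lra.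
    - right. field. nra. }
  assert (M1p : 0 < M1) by (unfold M1; lra).
  exists (Rmin 1 (delta * t / (3 * M1))). split.
  { apply Rmin_pos; [lra|]. apply Rdiv_lt_0_compat; nra. }
  intros w Cw Hw Hth.
  pose proof (Rmin_l 1 (delta * t / (3 * M1))) as th1.
  pose proof (Rmin_r 1 (delta * t / (3 * M1))) as th2.
  set (eps := d w (T w)) in *. assert (eps0' : 0 <= eps) by apply dpos.
  destruct (good_bounds t z ltac:(lra) (zk_good k)) as [B1 [B2 _]].
  destruct (zk_good k) as [Cz Hz]. fold t z in Hz. specialize (Hz w Cw).
  set (R0 := d z w) in *. set (h := d o (T z)) in *.
  assert (R0p : 0 <= R0) by apply dpos. assert (hp : 0 <= h) by apply dpos.
  assert (HR : R0 <= K + B). { unfold R0. pose proof (dtri z p0 w). rewrite (dsym p0 w) in H. lra. }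
  assert (HTz : d (T z) w <= R0 + eps).
  { eapply Rle_trans. apply (dtri (T z) (T w) w). rewrite (dsym (T w) w). fold eps.
    apply Rplus_le_compat_r. apply Tne; auto. }
  assert (HTz2 : d (T z) w ^ 2 <= R0 ^ 2 + eps * M1).
  { eapply Rle_trans. apply sq_le_of_le; [apply dpos|exact HTz].
    assert (eps <= 1) by lra. unfold M1. nra. }
  assert (Hmain : t * (R0 ^ 2 - d o w ^ 2 + (1 - t) * h ^ 2) <= eps * M1).
  { assert (0 <= eps * M1) by nra. nra. }
  assert (Hmain2 : R0 ^ 2 - d o w ^ 2 + (1 - t) * h ^ 2 <= delta / 3).
  { assert (eps * M1 <= delta * t / 3).
    { apply Rle_trans with ((delta * t / (3 * M1)) * M1). apply Rmult_le_compat_r; lra.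
      right. field. lra. }
    apply Rmult_le_reg_l with t; [lra|]. nra. }
  assert (Hwq : d w qlim ^ 2 <= R0 ^ 2 + rho * (2 * (K + B) + 1)).
  { assert (d w qlim <= R0 + rho).
    { pose proof (dtri w z qlim). rewrite (dsym w z) in H. fold R0 rho in H. lra. }
    assert (d w qlim ^ 2 <= (R0 + rho) ^ 2) by (apply sq_le_of_le; [apply dpos|auto]).
    assert (0 <= rho) by apply dpos. nra. }
  assert (Hoq : d o qlim ^ 2 <= h ^ 2 + rho * (4 * K + 1)).
  { assert (d o qlim <= h + rho).
    { pose proof (dtri o (T z) qlim) as H. pose proof (Tne z qlim Cz qlim_C) as H0. rewrite qlim_fix in H0.
      fold h in H. fold rho in H0. lra. }
    assert (d o qlim ^ 2 <= (h + rho) ^ 2) by (apply sq_le_of_le; [apply dpos|auto]).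
    assert (0 <= rho) by apply dpos. nra. }
  rewrite (dsym w o).
  assert (t * h ^ 2 <= t * (4 * K ^ 2)) by (apply Rmult_le_compat_l; nra).
  assert (0 <= rho) by apply dpos.
  unfold L in rho2. nra.
Qed.

End Zt.


Fixpoint psum (f : nat -> R) (n : nat) : R :=
  match n with O => 0 | S m => psum f m + f m end.

Lemma psum_sum_n : forall f n, psum f (S n) = sum_n f n.
Proof.
  intros f n. induction n.
  - simpl. rewrite sum_O. ring.
  - change (psum f (S (S n))) with (psum f (S n) + f (S n)). rewrite IHn, sum_Sn. reflexivity.
Qed.

Lemma psum_mono : forall f, (forall n, 0 <= f n) -> forall m n, (m <= n)%nat -> psum f m <= psum f n.
Proof.
  intros f Hf m n H. induction H; [lra|]. simpl. pose proof (Hf m0). lra.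
Qed.

Lemma lim_fin : forall u l, is_lim_seq u (Finite l) -> forall eps, 0 < eps ->
  exists N, forall n, (N <= n)%nat -> Rabs (u n - l) < eps.
Proof.
  intros u l H eps He. apply is_lim_seq_spec in H. exact (H (mkposreal eps He)).
Qed.

Lemma lim_inf : forall u, is_lim_seq u p_infty -> forall M, exists N, forall n, (N <= n)%nat -> M < u n.
Proof. intros u H M. apply is_lim_seq_spec in H. exact (H M). Qed.

Lemma series_facts : forall e, (forall n, 0 <= e n) -> ex_series e ->
  (exists L, forall n, psum e n <= L) /\
  (forall eps, 0 < eps -> exists N, forall m n, (N <= m)%nat -> (m <= n)%nat -> psum e n - psum e m <= eps).
Proof.
  intros e He [l Hl]. unfold is_series in Hl.
  assert (Hl' : is_lim_seq (sum_n e) (Finite l)) by exact Hl.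
  pose proof (lim_fin _ _ Hl') as Hc.
  split.
  - exists (l + 1). intro n. destruct (Hc 1 ltac:(lra)) as [N HN].
    specialize (HN (n + N)%nat ltac:(lia)). rewrite <- psum_sum_n in HN.
    apply Rabs_def2 in HN. pose proof (psum_mono e He n (S (n + N)) ltac:(lia)). lra.
  - intros eps Heps. destruct (Hc (eps / 2) ltac:(lra)) as [N HN].
    exists (S N). intros m n Hm Hmn.
    destruct m as [|m]; [lia|]. destruct n as [|n]; [lia|].
    rewrite !psum_sum_n.
    pose proof (HN m ltac:(lia)). pose proof (HN n ltac:(lia)).
    apply Rabs_def2 in H. apply Rabs_def2 in H0. lra.
Qed.

Lemma XL : forall (t e gam : nat -> R) (N1 : nat),
  (forall n, 0 <= t n) -> (forall n, 0 <= e n) -> (forall n, 0 <= gam n) ->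
  ex_series e -> (forall A, exists N, forall n, (N <= n)%nat -> A < psum gam n) ->
  (forall n, (N1 <= n)%nat -> t (S n) <= (1 - gam n) * t n + e n) ->
  forall eps, 0 < eps -> exists M, forall n, (M <= n)%nat -> t n <= eps.
Proof.
  intros t e gam N1 Ht He Hg Hs Hdiv Hrec eps Heps.
  destruct (series_facts e He Hs) as [[L HL] Hcau].
  destruct (Hcau (eps / 2) ltac:(lra)) as [N3 HN3].
  set (w := fun n => t n - psum e n).
  assert (Hw : forall n, (N1 <= n)%nat -> w (S n) <= w n - gam n * t n).
  { intros n Hn. unfold w. simpl. specialize (Hrec n Hn). lra. }
  set (M0 := (N1 + N3)%nat).
  assert (Hex : exists m, (M0 <= m)%nat /\ t m <= eps / 2).
  { apply Classical_Prop.NNPP. intro Hno.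
    assert (Hbig : forall n, (M0 <= n)%nat -> eps / 2 < t n).
    { intros n Hn. apply Rnot_le_lt. intro Hle. apply Hno. exists n. auto. }
    assert (Hind : forall j, w (M0 + j)%nat <= w M0 - eps / 2 * (psum gam (M0 + j) - psum gam M0)).
    { induction j.
      - rewrite Nat.add_0_r. lra.
      - rewrite Nat.add_succ_r. eapply Rle_trans. apply Hw. unfold M0; lia.
        simpl. pose proof (Hbig (M0 + j)%nat ltac:(lia)). pose proof (Hg (M0 + j)%nat). nra. }
    destruct (Hdiv (psum gam M0 + (w M0 + L + 1) / (eps / 2))) as [N HN].
    specialize (Hind N). specialize (HN (M0 + N)%nat ltac:(lia)).
    assert (w (M0 + N)%nat >= - L).
    { unfold w. pose proof (Ht (M0 + N)%nat). pose proof (HL (M0 + N)%nat). lra. }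
    assert (eps / 2 * (psum gam (M0 + N) - psum gam M0) > w M0 + L + 1).
    { assert (psum gam (M0 + N) - psum gam M0 > (w M0 + L + 1) / (eps / 2)) by lra.
      apply Rmult_gt_compat_l with (r := eps / 2) in H0; [|lra].
      replace (eps / 2 * ((w M0 + L + 1) / (eps / 2))) with (w M0 + L + 1) in H0 by (field; lra).
      lra. }
    lra. }
  destruct Hex as [m [Hm Htm]].
  exists m. intros n Hn.
  assert (Hmono : forall j, w (m + j)%nat <= w m).
  { induction j; [rewrite Nat.add_0_r; lra|]. rewrite Nat.add_succ_r.
    eapply Rle_trans. apply Hw. unfold M0 in Hm; lia.
    pose proof (Ht (m + j)%nat). pose proof (Hg (m + j)%nat). nra. }
  replace n with (m + (n - m))%nat by lia.
  pose proof (Hmono (n - m)%nat). unfold w in H.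
  pose proof (HN3 m (m + (n - m))%nat ltac:(unfold M0 in Hm; lia) ltac:(lia)).
  lra.
Qed.

Lemma FL : forall (s al be b e eta : nat -> R) (b0 Sb Bb : R) (N0 : nat),
  (forall n, 0 <= s n <= Sb) ->
  (forall n, 0 < al n < 1) -> is_lim_seq al 0 -> is_lim_seq (sum_n al) p_infty ->
  (forall n, 0 <= be n <= 1) -> 0 < b0 <= 1 -> (forall n, (N0 <= n)%nat -> b0 <= be n) ->
  0 <= Bb -> (forall n, b n <= Bb) ->
  (forall n, 0 <= e n) -> ex_series e ->
  (forall n, 0 <= eta n) ->
  (forall n, s (S n) <= (1 - al n * be n) * s n + al n * be n * b n + e n - eta n) ->
  (forall delta, 0 < delta -> exists theta, 0 < theta /\ exists N, forall n, (N <= n)%nat ->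
      eta n < theta -> b n <= delta) ->
  forall eps, 0 < eps -> exists N, forall n, (N <= n)%nat -> s n <= eps.
Proof.
  intros s al be b e eta b0 Sb Bb N0 Hs Hal Hal0 Hdiv Hbe Hb0 HbN0 HBb Hb He Hse Heta Hrec HK eps Heps.
  set (delta := eps / 2).
  destruct (HK delta ltac:(unfold delta; lra)) as [theta [Hth [N HN]]].
  assert (HSb : 0 <= Sb) by (pose proof (Hs 0%nat); lra).
  (* eventually al n * (Bb + Sb) + e n <= theta / 2 *)
  assert (He0 := ex_series_lim_0 e Hse).
  destruct (lim_fin _ _ He0 (theta / 4) ltac:(lra)) as [Ne HNe].
  destruct (lim_fin _ _ Hal0 (theta / (4 * (Bb + Sb + 1)))) as [Na HNa].
  { apply Rdiv_lt_0_compat; lra. }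
  set (t := fun n => Rmax (s n - delta) 0).
  set (N1 := (N + N0 + Ne + Na)%nat).
  assert (Hrec2 : forall n, (N1 <= n)%nat -> t (S n) <= (1 - al n * b0) * t n + e n).
  { intros n Hn.
    specialize (HNe n ltac:(unfold N1; lia)). specialize (HNa n ltac:(unfold N1; lia)).
    rewrite Rminus_0_r in HNe, HNa. apply Rabs_def2 in HNe. apply Rabs_def2 in HNa.
    pose proof (Hal n). pose proof (Hbe n). pose proof (HbN0 n ltac:(unfold N1; lia)).
    pose proof (Hs n). pose proof (Hs (S n)). pose proof (He n). pose proof (Heta n).
    pose proof (Hrec n). pose proof (Hb n).
    assert (Hsmall : al n * (Bb + Sb + 1) <= theta / 4).
    { apply Rle_trans with (theta / (4 * (Bb + Sb + 1)) * (Bb + Sb + 1)).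
      apply Rmult_le_compat_r; lra. right. field. lra. }
    assert (Htn : s n - delta <= t n) by (unfold t; apply Rmax_l).
    assert (Htn0 : 0 <= t n) by (unfold t; apply Rmax_r).
    assert (Htn1 : t n <= Sb) by (unfold t, delta; apply Rmax_lub; lra).
    assert (Hab : 0 <= al n * be n <= al n) by (split; nra).
    assert (Hab0 : al n * b0 <= al n * be n) by nra.
    assert (RHS0 : 0 <= (1 - al n * b0) * t n + e n) by nra.
    unfold t at 1. apply Rmax_lub; [|exact RHS0].
    destruct (Rlt_le_dec (eta n) theta) as [Hlt|Hge].
    - specialize (HN n ltac:(unfold N1; lia) Hlt).
      assert (al n * be n * b n <= al n * be n * delta) by (apply Rmult_le_compat_l; lra).
      assert ((1 - al n * be n) * (s n - delta) <= (1 - al n * be n) * t n) by (apply Rmult_le_compat_l; lra).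
      assert ((1 - al n * be n) * t n <= (1 - al n * b0) * t n) by nra.
      nra.
    - assert (al n * be n * b n <= al n * Bb) by nra.
      assert (0 <= al n * be n * s n) by nra.
      assert (Hdec : s (S n) <= s n - theta / 2) by nra.
      destruct (Rle_dec (s (S n) - delta) 0) as [Hneg|Hpos]; [lra|].
      assert (t n = s n - delta) by (unfold t; apply Rmax_left; lra).
      assert (al n * b0 * t n <= theta / 4) by nra.
      nra. }
  assert (Hgam : forall n, 0 <= al n * b0) by (intro n; pose proof (Hal n); nra).
  assert (Hdiv2 : forall A, exists N, forall n, (N <= n)%nat -> A < psum (fun n => al n * b0) n).
  { intro A. destruct (lim_inf _ Hdiv (A / b0)) as [M HM]. exists (S M). intros n Hn.
    destruct n as [|n]; [lia|].
    assert (Heq : psum (fun n => al n * b0) (S n) = b0 * psum al (S n)).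
    { clear. induction (S n) as [|k IH]; simpl; [ring|]. rewrite IH. ring. }
    rewrite Heq, psum_sum_n. specialize (HM n ltac:(lia)).
    apply Rmult_lt_compat_l with (r := b0) in HM; [|lra].
    replace (b0 * (A / b0)) with A in HM by (field; lra). exact HM. }
  destruct (XL t e (fun n => al n * b0) N1 ltac:(intro n; unfold t; apply Rmax_r) He Hgam Hse Hdiv2 Hrec2
    (eps / 2) ltac:(lra)) as [M HM].
  exists M. intros n Hn. specialize (HM n Hn). unfold t in HM.
  pose proof (Rmax_l (s n - delta) 0). unfold delta in *. lra.
Qed.


Lemma liminf_pos : forall u, Rbar_lt (Finite 0) (LimInf_seq u) ->
  exists b0, 0 < b0 /\ exists N, forall n, (N <= n)%nat -> b0 < u n.
Proof.
  intros u H. destruct (ex_LimInf_seq u) as [l Hl].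
  rewrite (is_LimInf_seq_unique _ _ Hl) in H. destruct l as [l| |]; simpl in H.
  - exists (l / 2). split; [lra|]. destruct (Hl (mkposreal (l/2) ltac:(lra))) as [_ [N HN]].
    exists N. intros n Hn. specialize (HN n Hn). simpl in HN. lra.
  - exists 1. split; [lra|]. apply Hl.
  - contradiction.
Qed.

Lemma limsup_lt1 : forall u, Rbar_lt (LimSup_seq u) (Finite 1) ->
  exists b1, 0 < b1 /\ exists N, forall n, (N <= n)%nat -> u n < 1 - b1.
Proof.
  intros u H. destruct (ex_LimSup_seq u) as [l Hl].
  rewrite (is_LimSup_seq_unique _ _ Hl) in H. destruct l as [l| |]; simpl in H.
  - exists ((1 - l) / 2). split; [lra|]. destruct (Hl (mkposreal ((1 - l)/2) ltac:(lra))) as [_ [N HN]].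
    exists N. intros n Hn. specialize (HN n Hn). simpl in HN. lra.
  - contradiction.
  - exists (1/2). split; [lra|]. apply Hl.
Qed.

Section Main.
Variable X : Type.
Variable d : X -> X -> R.
Hypothesis HM : is_metric X d.
Hypothesis HG : geodesic_space X d.
Hypothesis HCAT : CAT0 X d.
Hypothesis Hcomp : d_complete X d.
Variable o : X.
Variable C : X -> Prop.
Hypothesis HCcl : h_closed_set X d C.
Hypothesis HCcv : h_convex_set X d C.
Variable P : X -> X.
Hypothesis HP : is_metric_projection X d C P.
Variable T : X -> X.
Hypothesis HT : nonexpansive_on X d C T.
Variable p0 : X.
Hypothesis Hp0C : C p0.
Hypothesis Hp0T : T p0 = p0.
Variables alpha beta : nat -> R.
Hypothesis Ha : forall n, 0 < alpha n < 1.
Hypothesis Hb : forall n, 0 < beta n < 1.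
Variables u x y : nat -> X.
Hypothesis Hx0 : C (x 0%nat).
Hypothesis Hy : forall n, convcomb X d (alpha n) (u n) (T (x n)) (y n).
Hypothesis Hx : forall n, convcomb X d (1 - beta n) (x n) (P (y n)) (x (S n)).
Hypothesis Hi1 : is_lim_seq alpha 0.
Hypothesis Hi2 : is_lim_seq (sum_n alpha) p_infty.
Hypothesis Hiii : ex_series (fun n => alpha n * d (u n) o).

Notation dpos := (dpos X d HM).
Notation dsym := (dsym X d HM).
Notation dtri := (dtri X d HM).
Notation CN := (CN X d HM HG HCAT).
Notation Tne := (Tne X d C T HT).
Notation TC := (TC X d C T HT).

Lemma xC : forall n, C (x n).
Proof.
  induction n; auto.
  apply (cc_convex X d C HCcv _ _ _ _ IHn (PC X d C P HP (y n)) (Hx n)).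
Qed.

Lemma cc_le : forall lam a b z w, 0 <= lam <= 1 -> convcomb X d lam a b z ->
  d w z <= lam * d w a + (1 - lam) * d w b.
Proof.
  intros lam a b z w Hl Hc. pose proof (CN _ _ _ _ w Hc) as H.
  apply sq_le_inv. pose proof (dpos w a); pose proof (dpos w b); nra.
  assert ((d w a - d w b) ^ 2 <= d a b ^ 2).
  { pose proof (dtri w a b). pose proof (dtri w b a). rewrite (dsym b a) in H1.
    pose proof (dpos a b).
    destruct (Rle_dec (d w b) (d w a)).
    - apply sq_le_of_le; lra.
    - replace ((d w a - d w b) ^ 2) with ((d w b - d w a) ^ 2) by ring. apply sq_le_of_le; lra. }
  assert (0 <= lam * (1 - lam)) by nra. nra.
Qed.

Let K := d o p0.
Let du n := alpha n * d (u n) o.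

Lemma du_pos : forall n, 0 <= du n.
Proof. intro n. unfold du. pose proof (Ha n). pose proof (dpos (u n) o). nra. Qed.

Definition Lu : R := proj1_sig (constructive_indefinite_description _
  (proj1 (series_facts du du_pos Hiii))).
Lemma Lu_spec : forall n, psum du n <= Lu.
Proof.
  unfold Lu. destruct (constructive_indefinite_description _ _) as [L HL]. simpl. exact HL.
Qed.

Lemma psum_nonneg : forall n, 0 <= psum du n.
Proof. induction n; simpl; [lra|]. pose proof (du_pos n). lra. Qed.

Lemma du_le_Lu : forall n, du n <= Lu.
Proof.
  intro n. pose proof (Lu_spec (S n)). simpl in H. pose proof (psum_nonneg n). lra.
Qed.

Let Bx := Rmax (d (x 0%nat) p0) K + Lu.

Lemma y_bound : forall n, d p0 (y n) <= alpha n * (K + d (u n) o) + (1 - alpha n) * d p0 (x n).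
Proof.
  intro n. pose proof (Ha n).
  eapply Rle_trans. apply (cc_le (alpha n) _ _ _ p0 ltac:(lra) (Hy n)).
  assert (d p0 (u n) <= K + d (u n) o).
  { pose proof (dtri p0 o (u n)). rewrite (dsym p0 o), (dsym o (u n)) in H0. fold K in H0. lra. }
  assert (d p0 (T (x n)) <= d p0 (x n)).
  { rewrite <- Hp0T at 1. apply Tne; auto. apply xC. }
  nra.
Qed.

Lemma x_bound_step : forall n, d (x (S n)) p0 <= Rmax (d (x n) p0) K + du n.
Proof.
  intro n. pose proof (Ha n). pose proof (Hb n).
  rewrite dsym. eapply Rle_trans. apply (cc_le (1 - beta n) _ _ _ p0 ltac:(lra) (Hx n)).
  assert (HPy : d p0 (P (y n)) <= d p0 (y n)).
  { pose proof (P3 X d HM HG HCAT C P HP HCcv (y n) p0 Hp0C).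
    rewrite (dsym (y n) p0), (dsym (P (y n)) p0) in H1.
    apply sq_le_inv; [apply dpos|]. pose proof (pow2_ge_0 (d (y n) (P (y n)))). lra. }
  pose proof (y_bound n). unfold du.
  rewrite (dsym p0 (x n)) in *.
  pose proof (Rmax_l (d (x n) p0) K). pose proof (Rmax_r (d (x n) p0) K).
  pose proof (dpos (x n) p0). pose proof (dpos (u n) o).
  replace (1 - (1 - beta n)) with (beta n) by ring.
  assert (beta n * d p0 (P (y n)) <= beta n * (alpha n * (K + d (u n) o) + (1 - alpha n) * d (x n) p0)) by nra.
  assert (alpha n * K + (1 - alpha n) * d (x n) p0 <= Rmax (d (x n) p0) K) by nra.
  assert ((1 - beta n) * d (x n) p0 <= (1 - beta n) * Rmax (d (x n) p0) K) by (apply Rmult_le_compat_l; lra).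
  assert (beta n * (alpha n * K + (1 - alpha n) * d (x n) p0) <= beta n * Rmax (d (x n) p0) K) by (apply Rmult_le_compat_l; lra).
  assert (0 <= alpha n * d (u n) o) by nra.
  assert (beta n * (alpha n * d (u n) o) <= alpha n * d (u n) o) by nra.
  nra.
Qed.

Lemma x_bound : forall n, d (x n) p0 <= Bx.
Proof.
  assert (H : forall n, d (x n) p0 <= Rmax (d (x 0%nat) p0) K + psum du n).
  { induction n.
    - simpl. pose proof (Rmax_l (d (x 0%nat) p0) K). lra.
    - eapply Rle_trans. apply x_bound_step. simpl. rewrite <- Rplus_assoc.
      apply Rplus_le_compat_r. apply Rmax_lub; [exact IHn|].
      pose proof (Rmax_r (d (x 0%nat) p0) K). pose proof (psum_nonneg n). lra. }
  intro n. unfold Bx. pose proof (H n). pose proof (Lu_spec n). lra.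
Qed.


Let q := qlim X d C T o p0.
Lemma q_fix : T q = q.
Proof. exact (qlim_fix X d HM HG HCAT Hcomp C HCcl HCcv P HP T HT o p0 Hp0C Hp0T). Qed.
Lemma q_C : C q.
Proof. exact (qlim_C X d HM HG HCAT Hcomp C HCcl HCcv P HP T HT o p0 Hp0C Hp0T). Qed.

Definition yp n := ccf X d (alpha n) o (T (x n)).
Lemma yp_cc : forall n, convcomb X d (alpha n) o (T (x n)) (yp n).
Proof. intro n. apply ccf_spec; auto. pose proof (Ha n); lra. Qed.

Lemma Tx_q : forall n, d (T (x n)) q <= d (x n) q.
Proof. intro n. rewrite <- q_fix at 1. apply Tne; [apply xC|apply q_C]. Qed.

Let bq := d q o + d q p0 + Bx.

Lemma xq_bound : forall n, d (x n) q <= d q p0 + Bx.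
Proof.
  intro n. pose proof (dtri (x n) p0 q). pose proof (x_bound n). rewrite (dsym p0 q) in H. lra.
Qed.

Lemma yp_bound : forall n, d (yp n) q <= bq.
Proof.
  intro n. pose proof (Ha n). rewrite dsym.
  eapply Rle_trans. apply (cc_le (alpha n) _ _ _ q ltac:(lra) (yp_cc n)).
  pose proof (Tx_q n). pose proof (xq_bound n). rewrite (dsym q (T (x n))).
  pose proof (dpos q o). pose proof (dpos (T (x n)) q). unfold bq. nra.
Qed.

Definition ee n := (2 * bq + Lu) * du n.
Definition bb n := d (yp n) q ^ 2 + d o q ^ 2 - d (yp n) o ^ 2.
Definition eta n := beta n * (1 - beta n) * d (x n) (P (y n)) ^ 2 + beta n * d (y n) (P (y n)) ^ 2.
Definition ss n := d (x n) q ^ 2.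

Lemma recur : forall n, ss (S n) <= (1 - alpha n * beta n) * ss n + alpha n * beta n * bb n + ee n - eta n.
Proof.
  intro n. pose proof (Ha n) as Han. pose proof (Hb n) as Hbn.
  unfold ss, bb, ee, eta.
  set (z := P (y n)). set (v := T (x n)). set (y' := yp n).
  pose proof (CN _ _ _ _ q (Hx n)) as CNx. fold z in CNx.
  replace (1 - (1 - beta n)) with (beta n) in CNx by ring.
  pose proof (P3 X d HM HG HCAT C P HP HCcv (y n) q q_C) as H3. fold z in H3.
  pose proof (G4a X d HM HG HCAT (alpha n) (u n) o v (y n) y' ltac:(lra) (Hy n) (yp_cc n)) as H4.
  assert (Hyq : d (y n) q <= d y' q + du n).
  { pose proof (dtri (y n) y' q). unfold du. lra. }
  pose proof (yp_bound n) as Hyb. fold y' in Hyb.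
  pose proof (du_le_Lu n). pose proof (du_pos n).
  assert (Hyq2 : d (y n) q ^ 2 <= d y' q ^ 2 + (2 * bq + Lu) * du n).
  { eapply Rle_trans. apply sq_le_of_le; [apply dpos|exact Hyq].
    pose proof (dpos y' q). nra. }
  pose proof (CN _ _ _ _ q (yp_cc n)) as H5. fold v y' in H5.
  pose proof (cc_d1 X d _ _ _ _ (yp_cc n)) as H6. fold v y' in H6.
  assert (HV : d v q ^ 2 <= d (x n) q ^ 2) by (apply sq_le_of_le; [apply dpos|apply Tx_q]).
  set (X1 := d y' q ^ 2) in *. set (U := d o q ^ 2) in *. set (V := d v q ^ 2) in *. set (s := d (x n) q ^ 2) in *.
  assert (Hhal : X1 <= (1 - alpha n) * s + alpha n * (X1 + U - d y' o ^ 2)).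
  { rewrite H6. rewrite (dsym q y'), (dsym q o), (dsym q v) in H5. fold X1 U V in H5.
    assert ((1 - alpha n) * X1 <= (1 - alpha n) * (alpha n * U + (1 - alpha n) * V - alpha n * (1 - alpha n) * d o v ^ 2))
      by (apply Rmult_le_compat_l; lra).
    assert (0 <= U) by (unfold U; apply pow2_ge_0).
    assert (0 <= V) by (unfold V; apply pow2_ge_0).
    assert (0 <= s) by (unfold s; apply pow2_ge_0).
    assert ((1 - alpha n) * (1 - alpha n) * V <= (1 - alpha n) * (1 - alpha n) * s) by (apply Rmult_le_compat_l; nra).
    assert (0 <= alpha n * ((1 - alpha n) * s)) by (apply Rmult_le_pos; [lra|apply Rmult_le_pos; lra]).
    assert ((1 - alpha n) * (1 - alpha n) * s <= (1 - alpha n) * s) by nra.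
    assert (0 <= alpha n * alpha n * U) by (apply Rmult_le_pos; nra).
    assert (Hx1 : (1 - alpha n) * X1 <= alpha n * U + (1 - alpha n) * s - alpha n * ((1 - alpha n) * d o v) ^ 2) by nra.
    nra. }
  rewrite (dsym q (x (S n))), (dsym q (x n)), (dsym q z) in CNx. fold s in CNx.
  assert (Hzq : d z q ^ 2 <= X1 + (2 * bq + Lu) * du n - d (y n) z ^ 2).
  { fold X1 in Hyq2. lra. }
  assert (0 <= (2 * bq + Lu) * du n).
  { apply Rmult_le_pos; [|auto]. pose proof (dpos q o). pose proof (dpos q p0).
    pose proof (x_bound 0). pose proof (dpos (x 0%nat) p0). unfold bq. lra. }
  assert (beta n * d z q ^ 2 <= beta n * (X1 + (2 * bq + Lu) * du n - d (y n) z ^ 2)) by (apply Rmult_le_compat_l; lra).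
  assert (beta n * X1 <= beta n * ((1 - alpha n) * s + alpha n * (X1 + U - d y' o ^ 2))) by (apply Rmult_le_compat_l; lra).
  assert (beta n * ((2 * bq + Lu) * du n) <= (2 * bq + Lu) * du n) by nra.
  nra.
Qed.


Lemma sqdiff : forall A B D, 0 <= A -> 0 <= B -> A - B <= D -> B - A <= D -> A ^ 2 - B ^ 2 <= D * (A + B).
Proof. intros. nra. Qed.

Lemma Klem : forall b0 b1 N0, 0 < b0 -> 0 < b1 ->
  (forall n, (N0 <= n)%nat -> b0 < beta n < 1 - b1) ->
  forall delta, 0 < delta -> exists theta, 0 < theta /\ exists N, forall n, (N <= n)%nat ->
      eta n < theta -> bb n <= delta.
Proof.
  intros b0 b1 N0 Hb0 Hb1 HbN delta Hdel.
  assert (HBx : 0 <= Bx).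
  { pose proof (x_bound 0). pose proof (dpos (x 0%nat) p0). lra. }
  assert (HK : 0 <= K) by apply dpos.
  assert (Hbq : 0 <= bq). { unfold bq. pose proof (dpos q o). pose proof (dpos q p0). lra. }
  destruct (Ulem X d HM HG HCAT Hcomp C HCcl HCcv P HP T HT o p0 Hp0C Hp0T (delta / 2) Bx ltac:(lra) HBx)
    as [theta0 [Hth0 HU]].
  fold q in HU.
  set (W := 2 * bq + Bx + K).
  assert (HW : 0 <= W) by (unfold W; lra).
  set (r := Rmin theta0 (delta / (4 * W + 1))).
  assert (Hr : 0 < r). { unfold r. apply Rmin_pos; auto. apply Rdiv_lt_0_compat; lra. }
  assert (Hr1 : r <= theta0) by apply Rmin_l.
  assert (Hr2 : 2 * W * r <= delta / 2).
  { apply Rle_trans with (2 * W * (delta / (4 * W + 1))).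
    - apply Rmult_le_compat_l; [lra|apply Rmin_r].
    - apply Rmult_le_reg_r with (4 * W + 1); [lra|].
      replace (2 * W * (delta / (4 * W + 1)) * (4 * W + 1)) with (2 * W * delta) by (field; lra).
      nra. }
  assert (b1lt : b1 < 1). { pose proof (HbN N0 (le_n _)). pose proof (Hb N0). lra. }
  exists (b0 * b1 * (r / 8) ^ 2). split; [apply Rmult_lt_0_compat; [nra|nra]|].
  destruct (lim_fin _ _ (ex_series_lim_0 du Hiii) (r / 8) ltac:(lra)) as [N1 HN1].
  destruct (lim_fin _ _ Hi1 (r / (8 * (K + Bx + 1)))) as [N2 HN2].
  { apply Rdiv_lt_0_compat; lra. }
  exists (N0 + N1 + N2)%nat. intros n Hn Heta.
  specialize (HN1 n ltac:(lia)). specialize (HN2 n ltac:(lia)). specialize (HbN n ltac:(lia)).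
  rewrite Rminus_0_r in HN1, HN2. rewrite Rabs_pos_eq in HN1 by apply du_pos.
  pose proof (Ha n) as Han. rewrite Rabs_pos_eq in HN2 by lra.
  assert (HaKB : alpha n * (K + Bx) < r / 8).
  { apply Rle_lt_trans with (alpha n * (K + Bx + 1)). nra.
    apply Rlt_le_trans with (r / (8 * (K + Bx + 1)) * (K + Bx + 1)).
    apply Rmult_lt_compat_r; lra. right. field. lra. }
  set (z := P (y n)) in *. set (v := T (x n)).
  unfold eta in Heta. fold z in Heta.
  assert (Hxz : d (x n) z < r / 8).
  { apply Rnot_le_lt. intro Hc.
    assert ((r/8)^2 <= d (x n) z ^ 2) by (apply sq_le_of_le; lra).
    assert (b0 * b1 <= beta n * (1 - beta n)) by nra.
    assert (0 <= beta n * d (y n) z ^ 2) by (apply Rmult_le_pos; [lra|apply pow2_ge_0]).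
    assert (0 <= b0 * b1) by nra. assert (0 <= (r/8)^2) by nra.
    assert (b0 * b1 * (r / 8) ^ 2 <= beta n * (1 - beta n) * d (x n) z ^ 2) by (apply Rmult_le_compat; nra).
    lra. }
  assert (Hyz : d (y n) z < r / 8).
  { apply Rnot_le_lt. intro Hc.
    assert ((r/8)^2 <= d (y n) z ^ 2) by (apply sq_le_of_le; lra).
    assert (0 <= beta n * (1 - beta n) * d (x n) z ^ 2) by (apply Rmult_le_pos; [nra|apply pow2_ge_0]).
    assert (b0 * b1 * (r / 8) ^ 2 <= b0 * (r/8)^2).
    { assert (0 <= (r/8)^2) by nra. apply Rmult_le_compat_r; nra. }
    assert (b0 * (r / 8) ^ 2 <= beta n * d (y n) z ^ 2) by (apply Rmult_le_compat; nra).
    lra. }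
  assert (Hov : d o v <= K + Bx).
  { pose proof (dtri o p0 v) as H. fold K in H.
    assert (d p0 v <= d p0 (x n)) by (unfold v; rewrite <- Hp0T at 1; apply Tne; [exact Hp0C|apply xC]).
    rewrite (dsym p0 (x n)) in H0. pose proof (x_bound n). lra. }
  assert (Hyv : d (y n) v <= du n + alpha n * (K + Bx)).
  { pose proof (cc_d2 X d _ _ _ _ (Hy n)) as Ecd. fold v in Ecd. rewrite Ecd.
    pose proof (dtri (u n) o v). pose proof (dpos (u n) v). unfold du. nra. }
  assert (HxT : d (x n) v < r / 2).
  { pose proof (dtri (x n) z v). pose proof (dtri z (y n) v). rewrite (dsym z (y n)) in H0. lra. }
  assert (Hypx : d (yp n) (x n) < r).
  { pose proof (dtri (yp n) v (x n)) as H. pose proof (cc_d2 X d _ _ _ _ (yp_cc n)) as Ecd. fold v in Ecd. rewrite Ecd in H.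
    rewrite (dsym v (x n)) in H. pose proof (dpos o v). nra. }
  specialize (HU (x n) (xC n) (x_bound n) ltac:(fold v; lra)).
  unfold bb.
  pose proof (yp_bound n). pose proof (xq_bound n).
  assert (E1 : d (yp n) q ^ 2 - d (x n) q ^ 2 <= d (yp n) (x n) * (d (yp n) q + d (x n) q)).
  { apply sqdiff; try apply dpos.
    - pose proof (dtri (yp n) (x n) q). lra.
    - pose proof (dtri (x n) (yp n) q). rewrite (dsym (x n) (yp n)) in H1. lra. }
  assert (E2 : d (x n) o ^ 2 - d (yp n) o ^ 2 <= d (yp n) (x n) * (d (x n) o + d (yp n) o)).
  { apply sqdiff; try apply dpos.
    - pose proof (dtri (x n) (yp n) o). rewrite (dsym (x n) (yp n)) in H1. lra.
    - pose proof (dtri (yp n) (x n) o). lra. }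
  assert (Hyo : d (yp n) o <= 2 * bq).
  { pose proof (dtri (yp n) q o). assert (d q o <= bq) by (unfold bq; pose proof (dpos q p0); lra). lra. }
  assert (Hxo : d (x n) o <= Bx + K).
  { pose proof (dtri (x n) p0 o). rewrite (dsym p0 o) in H1. fold K in H1. pose proof (x_bound n). lra. }
  assert (Hxq : d (x n) q <= bq) by (unfold bq; pose proof (dpos q o); lra).
  assert (d (yp n) (x n) * (d (yp n) q + d (x n) q) <= r * W).
  { apply Rmult_le_compat; try lra. apply dpos. pose proof (dpos (yp n) q); pose proof (dpos (x n) q); lra.
    unfold W. lra. }
  assert (d (yp n) (x n) * (d (x n) o + d (yp n) o) <= r * W).
  { apply Rmult_le_compat; try lra. apply dpos. pose proof (dpos (yp n) o); pose proof (dpos (x n) o); lra.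
    unfold W. lra. }
  lra.
Qed.

Lemma main_conv : (exists b0, 0 < b0 /\ exists N, forall n, (N <= n)%nat -> b0 < beta n) ->
  (exists b1, 0 < b1 /\ exists N, forall n, (N <= n)%nat -> beta n < 1 - b1) ->
  d_converges_to X d x q.
Proof.
  intros [b0 [Hb0 [Na HNa]]] [b1 [Hb1 [Nb HNb]]].
  assert (HBx : 0 <= Bx).
  { pose proof (x_bound 0). pose proof (dpos (x 0%nat) p0). lra. }
  assert (Hbq : 0 <= bq). { unfold bq. pose proof (dpos q o). pose proof (dpos q p0). lra. }
  assert (HLu : 0 <= Lu) by (pose proof (du_le_Lu 0); pose proof (du_pos 0); lra).
  assert (Hmain := FL ss alpha beta bb ee eta (Rmin b0 (1/2)) ((d q p0 + Bx) ^ 2) (bq ^ 2 + d o q ^ 2) (Na + Nb)).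
  intros eps Heps.
  destruct (Hmain) with (eps := eps ^ 2 / 2) as [N HN].
  - intro n. unfold ss. split; [apply pow2_ge_0|]. apply sq_le_of_le; [apply dpos|apply xq_bound].
  - exact Ha.
  - exact Hi1.
  - exact Hi2.
  - intro n. pose proof (Hb n). lra.
  - pose proof (Rmin_r b0 (1/2)). split; [apply Rmin_pos; lra|lra].
  - intros n Hn. pose proof (Rmin_l b0 (1/2)). pose proof (HNa n ltac:(lia)). lra.
  - pose proof (pow2_ge_0 bq). pose proof (pow2_ge_0 (d o q)). lra.
  - intro n. unfold bb. pose proof (yp_bound n). pose proof (dpos (yp n) q).
    assert (d (yp n) q ^ 2 <= bq ^ 2) by (apply sq_le_of_le; auto). pose proof (pow2_ge_0 (d (yp n) o)). lra.
  - intro n. unfold ee. apply Rmult_le_pos; [lra|apply du_pos].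
  - unfold ee. apply (ex_series_scal_l (2 * bq + Lu) du). exact Hiii.
  - intro n. unfold eta. pose proof (Hb n).
    assert (0 <= beta n * (1 - beta n)) by nra.
    pose proof (pow2_ge_0 (d (x n) (P (y n)))). pose proof (pow2_ge_0 (d (y n) (P (y n)))). nra.
  - exact recur.
  - apply (Klem b0 b1 (Na + Nb)); auto. intros n Hn. split; [apply HNa|apply HNb]; lia.
  - nra.
  - exists N. intros n Hn. specialize (HN n Hn). unfold ss in HN.
    apply Rnot_le_lt. intro Hc. assert (eps ^ 2 <= d (x n) q ^ 2) by (apply sq_le_of_le; lra). nra.
Qed.

End Main.


Theorem theorem4p2 (X : Type) (d : X -> X -> R) (HX : hadamard X d) (o : X)
  (C : X -> Prop) (HCne : exists c, C c) (HCcl : h_closed_set X d C)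
  (HCcv : h_convex_set X d C)
  (P : X -> X) (HP : is_metric_projection X d C P)
  (T : X -> X) (HT : nonexpansive_on X d C T)
  (HF : exists p, C p /\ T p = p)
  (alpha beta : nat -> R)
  (Ha : forall n, 0 < alpha n < 1) (Hb : forall n, 0 < beta n < 1)
  (u : nat -> X) (x y : nat -> X)
  (Hx0 : C (x 0%nat))
  (Hy : forall n, convcomb X d (alpha n) (u n) (T (x n)) (y n))
  (Hx : forall n, convcomb X d (1 - beta n) (x n) (P (y n)) (x (S n)))
  (Hi1 : is_lim_seq alpha 0)
  (Hi2 : is_lim_seq (sum_n alpha) p_infty)
  (Hii : Rbar_lt (Finite 0) (LimInf_seq beta) /\
         Rbar_le (LimInf_seq beta) (LimSup_seq beta) /\
         Rbar_lt (LimSup_seq beta) (Finite 1))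
  (Hiii : ex_series (fun n => alpha n * d (u n) o)) :
  exists q, C q /\ T q = q /\ d_converges_to X d x q.
Proof.
  destruct HX as [HM [Hcomp [HG HCAT]]]. destruct HF as [p0 [Hp0C Hp0T]].
  exists (qlim X d C T o p0). split; [|split].
  - exact (qlim_C X d HM HG HCAT Hcomp C HCcl HCcv P HP T HT o p0 Hp0C Hp0T).
  - exact (qlim_fix X d HM HG HCAT Hcomp C HCcl HCcv P HP T HT o p0 Hp0C Hp0T).
  - apply (main_conv X d HM HG HCAT Hcomp o C HCcl HCcv P HP T HT p0 Hp0C Hp0T alpha beta Ha Hb
      u x y Hx0 Hy Hx Hi1 Hi2 Hiii).
    + apply liminf_pos. tauto.
    + apply limsup_lt1. tauto.
Qed.
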